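(* Let $U\in C^\infty(\mathbb{R}^{2d})$ be real and satisfy Hypothesis (U), with associated symplectomorphism $\Phi$. An operator $W\in\mathbb{B}(\mathcal S(\mathbb{R}^d);\mathcal S'(\mathbb{R}^d))$ is of the form $\mathfrak{Op}^A_\Phi(a)$ with $a\in S^{-\infty}(\mathbb{R}^d)$ if and only if there exists $b\in S^{-\infty}(\mathbb{R}^d)$ with $W=b^A(x,D)$.
   Context: Notation: $\langle\xi\rangle=(1+|\xi|^2)^{1/2}$, $\bar d\eta=(2\pi)^{-d}d\eta$. $S^m(\mathbb{R}^d)$: $a\in C^\infty(\mathbb{R}^{2d})$ with $|\partial_x^\alpha\partial_\xi^\beta a|\le C_{\alpha\beta}\langle\xi\rangle^{m-|\beta|}$; $S^{-\infty}=\bigcap_mS^m$. $S^+$: smooth $f$ with $\partial_{x_j}f\in S^1$, $\partial_{\xi_j}f\in S^0$. Hypothesis (U): $U(x,\eta)=\langle x,\eta\rangle+d(x,\eta)$, $d\in S^+$ real, $\|(\partial_{x_j}\partial_{\eta_k}d)\|\le\delta<1$ everywhere; $\Phi(\nabla_\eta U(x,\eta),\eta)=(x,\nabla_xU(x,\eta))$. Magnetic field $B=\frac12\sum B_{jk}dx_j\wedge dx_k$ closed, real $B_{jk}=-B_{kj}\in BC^\infty$; $A$ real 1-form with smooth polynomially bounded coefficients, $dA=B$; $\omega^A(x,y)=\exp\{-i\int_{[x,y]}A\}$ (line integral along the segment $x\to y$). $[b^A(x,D)u](x)=\iint e^{i\langle x-y,\eta\rangle}\omega^A(x,y)b(x,\eta)u(y)dy\,\bar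 d\eta$; $[\mathfrak{Op}^A_\Phi(a)u](x)=\iint e^{i(U(x,\eta)-\langle y,\eta\rangle)}\omega^A(x,y)a(x,\eta)u(y)dy\,\bar d\eta$. *)

(* Defs.v *)
From HB Require Import structures.
From mathcomp Require Import all_boot all_order all_algebra.
From mathcomp Require Import all_classical all_reals all_analysis.
From mathcomp Require Import complex.
Set Implicit Arguments. Unset Strict Implicit. Unset Printing Implicit Defensive.
Import Order.TTheory GRing.Theory Num.Theory.
Import numFieldNormedType.Exports.
Local Open Scope classical_set_scope.
Local Open Scope ring_scope.
Local Open Scope complex_scope.

Section PseudoDiff.
Variable R : realType.

Definition cmod (z : R[i]) : R := Num.sqrt (complex.Re z ^+ 2 + complex.Im z ^+ 2).
Definition cexpi (t : R) : R[i] := cos t +i* sin t.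

Definition dotR (n : nat) (x y : 'rV[R]_n) : R := \sum_(i < n) x 0 i * y 0 i.
Definition jb (n : nat) (x : 'rV[R]_n) : R := Num.sqrt (1 + dotR x x).
Definition eucl (n : nat) (v : 'cV[R]_n) : R := Num.sqrt (\sum_(i < n) v i 0 ^+ 2).
Definition ev (n : nat) (j : 'I_n) : 'rV[R]_n := delta_mx 0 j.

Definition dlist (V : normedModType R) (vs : seq V) (f : V -> R) : V -> R :=
  foldr (fun v g => fun z => 'D_v g z) f vs.
Definition smooth (V : normedModType R) (f : V -> R) : Prop :=
  forall (vs : seq V) (z : V), differentiable (dlist vs f) z.

Definition mpart1 (n : nat) (al : 'I_n -> nat) (f : 'rV[R]_n -> R) : 'rV[R]_n -> R :=
  dlist (flatten [seq nseq (al j) (ev j) | j <- enum 'I_n]) f.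

Definition ps (n : nat) := ('rV[R]_n * 'rV[R]_n)%type.
Definition dx (n : nat) (j : 'I_n) : ps n := (ev j, 0).
Definition dxi (n : nat) (k : 'I_n) : ps n := (0, ev k).
Definition mpart (n : nat) (al be : 'I_n -> nat) (f : ps n -> R) : ps n -> R :=
  dlist (flatten [seq nseq (al j) (dx j) | j <- enum 'I_n]
         ++ flatten [seq nseq (be k) (dxi k) | k <- enum 'I_n]) f.
Definition mlen (n : nat) (be : 'I_n -> nat) : nat := \sum_(k < n) be k.

Definition symbR (n : nat) (m : R) (a : ps n -> R) : Prop :=
  smooth a /\
  forall al be : 'I_n -> nat, exists C : R, forall z : ps n,
    `|mpart al be a z| <= C * jb z.2 `^ (m - (mlen be)%:R).

Definition symbC (n : nat) (m : R) (a : ps n -> R[i]) : Prop :=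
  smooth (fun z => complex.Re (a z)) /\ smooth (fun z => complex.Im (a z)) /\
  forall al be : 'I_n -> nat, exists C : R, forall z : ps n,
    cmod (mpart al be (fun w => complex.Re (a w)) z +i* mpart al be (fun w => complex.Im (a w)) z)
      <= C * jb z.2 `^ (m - (mlen be)%:R).

Definition Sminf (n : nat) (a : ps n -> R[i]) : Prop := forall m : R, symbC m a.

Definition Splus (n : nat) (f : ps n -> R) : Prop :=
  smooth f /\
  (forall j : 'I_n, symbR 1 (fun z => 'D_(dx j) f z)) /\
  (forall j : 'I_n, symbR 0 (fun z => 'D_(dxi j) f z)).

Definition hypU (n : nat) (U : ps n -> R) : Prop :=
  exists dd : ps n -> R,
    (forall z : ps n, U z = dotR z.1 z.2 + dd z) /\ Splus dd /\
    exists delta : R, delta < 1 /\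
      forall (z : ps n) (v : 'cV[R]_n),
        eucl ((\matrix_(j < n, k < n) 'D_(dx j) (fun w => 'D_(dxi k) dd w) z) *m v)
          <= delta * eucl v.

Definition grad_x (n : nat) (U : ps n -> R) (z : ps n) : 'rV[R]_n :=
  \row_(j < n) 'D_(dx j) U z.
Definition grad_xi (n : nat) (U : ps n -> R) (z : ps n) : 'rV[R]_n :=
  \row_(k < n) 'D_(dxi k) U z.

Definition assoc_Phi (n : nat) (U : ps n -> R) (Phi : ps n -> ps n) : Prop :=
  forall (x xi : 'rV[R]_n),
    Phi (grad_xi U (x, xi), xi) = (x, grad_x U (x, xi)).

Definition magB (n : nat) (A : 'I_n -> 'rV[R]_n -> R) (j k : 'I_n) : 'rV[R]_n -> R :=
  fun x => 'D_(ev j) (A k) x - 'D_(ev k) (A j) x.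

Definition magnetic_pot (n : nat) (A : 'I_n -> 'rV[R]_n -> R) : Prop :=
  (forall j : 'I_n, smooth (A j) /\
     exists (C : R) (N : nat), forall x, `|A j x| <= C * jb x ^+ N) /\
  (forall j k : 'I_n, smooth (magB A j k) /\
     forall al : 'I_n -> nat, exists C : R, forall x, `|mpart1 al (magB A j k) x| <= C).

Definition line_int (n : nat) (A : 'I_n -> 'rV[R]_n -> R) (x y : 'rV[R]_n) : R :=
  Rintegral (@lebesgue_measure R) `[0%R, 1%R]
    (fun t : R => \sum_(j < n) A j (x + t *: (y - x)) * (y 0 j - x 0 j)).

Definition omegaA (n : nat) (A : 'I_n -> 'rV[R]_n -> R) (x y : 'rV[R]_n) : R[i] :=
  cexpi (- line_int A x y).

Fixpoint intRn (n : nat) : ('rV[R]_n -> R) -> R :=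
  match n return ('rV[R]_n -> R) -> R with
  | 0 => fun f => f 0
  | n'.+1 => fun f =>
      Rintegral (@lebesgue_measure R) setT
        (fun t : R => intRn (fun v : 'rV[R]_n' => f (row_mx (t%:M : 'rV[R]_1) v)))
  end.
Definition intCn (n : nat) (f : 'rV[R]_n -> R[i]) : R[i] :=
  intRn (fun v => complex.Re (f v)) +i* intRn (fun v => complex.Im (f v)).

Definition schwartz (n : nat) (u : 'rV[R]_n -> R[i]) : Prop :=
  smooth (fun x => complex.Re (u x)) /\ smooth (fun x => complex.Im (u x)) /\
  forall (al : 'I_n -> nat) (N : nat), exists C : R, forall x : 'rV[R]_n,
    jb x ^+ N * cmod (mpart1 al (fun y => complex.Re (u y)) x +i* mpart1 al (fun y => complex.Im (u y)) x)
      <= C.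

Definition magOp (n : nat) (A : 'I_n -> 'rV[R]_n -> R) (b : ps n -> R[i])
    (u : 'rV[R]_n -> R[i]) (x : 'rV[R]_n) : R[i] :=
  ((2 * pi) ^- n)%:C *
  intCn (fun w : 'rV[R]_(n + n) =>
     let y := lsubmx w in let eta := rsubmx w in
     cexpi (dotR (x - y) eta) * omegaA A x y * b (x, eta) * u y).

Definition OpPhiA (n : nat) (U : ps n -> R) (A : 'I_n -> 'rV[R]_n -> R)
    (a : ps n -> R[i]) (u : 'rV[R]_n -> R[i]) (x : 'rV[R]_n) : R[i] :=
  ((2 * pi) ^- n)%:C *
  intCn (fun w : 'rV[R]_(n + n) =>
     let y := lsubmx w in let eta := rsubmx w in
     cexpi (U (x, eta) - dotR y eta) * omegaA A x y * a (x, eta) * u y).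

End PseudoDiff.

(* Main.v *)
Require Import Defs.
From HB Require Import structures.
From mathcomp Require Import all_boot all_order all_algebra.
From mathcomp Require Import all_classical all_reals all_analysis.
From mathcomp Require Import complex.
From mathcomp Require Import ring lra.
Import Order.TTheory GRing.Theory Num.Theory.
Import numFieldNormedType.Exports.
Set Implicit Arguments. Unset Strict Implicit.
Local Open Scope ring_scope.

Section Gen.
Variables (R : realType) (V : normedModType R).
Local Notation dl := (@dlist R V).
Definition Dv (v : V) (f : V -> R) := fun z => 'D_v f z.

Lemma ddv (f : V -> R) a v : differentiable f a -> derivable f a v.
Proof. exact: (@diff_derivable _ _ _ f a v). Qed.

Arguments ddv {f a} v _.

Lemma dlist_cat s1 s2 f : dl (s1 ++ s2) f = dl s1 (dl s2 f).
Proof. by rewrite /dlist foldr_cat. Qed.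
Lemma dlist_rcons s v f : dl (rcons s v) f = dl s (Dv v f).
Proof. by rewrite -cats1 dlist_cat. Qed.

Definition PN (N : nat) (f : V -> R) :=
  forall s, (size s <= N)%N -> forall z, differentiable (dl s f) z.

Lemma smoothP f : smooth f <-> forall N, PN N f.
Proof.
split; first by move=> H N s _ z; apply: H.
by move=> H s z; apply: (H (size s)).
Qed.

Lemma PN_D N v f : PN N.+1 f -> PN N (Dv v f).
Proof. by move=> H s Hs z; rewrite -dlist_rcons; apply: H; rewrite size_rcons. Qed.

Lemma PN_le N M f : (M <= N)%N -> PN N f -> PN M f.
Proof. by move=> HM H s Hs; apply: H; apply: leq_trans HM. Qed.

Arguments PN_D {N} v {f} _.
Arguments PN_le {N M f} _ _.

Lemma dlistD s (f g : V -> R) :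
  (forall t, (size t < size s)%N -> forall z,
      differentiable (dl t f) z /\ differentiable (dl t g) z) ->
  dl s (fun z => f z + g z) = (fun z => dl s f z + dl s g z).
Proof.
elim: s => [|v s IH] H //=.
have -> : dl s (fun z => f z + g z) = (fun z => dl s f z + dl s g z).
  by apply: IH => t Ht; apply: H; rewrite /= ltnS ltnW.
apply/funext => z.
have [df dg] := H s (ltnSn _) z.
have := deriveD (ddv v df) (ddv v dg). move=> <-. done.
Qed.

Lemma dlistN s (f : V -> R) :
  (forall t, (size t < size s)%N -> forall z, differentiable (dl t f) z) ->
  dl s (fun z => - f z) = (fun z => - dl s f z).
Proof.
elim: s => [|v s IH] H //=.
have -> : dl s (fun z => - f z) = (fun z => - dl s f z).
  by apply: IH => t Ht; apply: H; rewrite /= ltnS ltnW.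
apply/funext => z.
have df := H s (ltnSn _) z.
exact: (deriveN (ddv v df)).
Qed.

Lemma DvM v (f g : V -> R) z : differentiable f z -> differentiable g z ->
  Dv v (fun x => f x * g x) z = Dv v f z * g z + f z * Dv v g z.
Proof.
move=> df dg; rewrite /Dv.
rewrite (deriveM (ddv v df) (ddv v dg)).
by rewrite /GRing.scale /= addrC mulrC.
Qed.

Lemma PN_M N (f g : V -> R) : PN N f -> PN N g -> PN N (fun z => f z * g z).
Proof.
elim: N f g => [|N IH] f g Hf Hg s Hs z.
  move: Hs; rewrite leqn0 => /nilP -> /=.
  exact: differentiableM (Hf [::] isT z) (Hg [::] isT z).
case/lastP: s Hs => [|t v] Hs.
  exact: differentiableM (Hf [::] isT z) (Hg [::] isT z).
rewrite size_rcons ltnS in Hs.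
rewrite dlist_rcons.
have -> : Dv v (fun x => f x * g x) =
   (fun x => Dv v f x * g x + f x * Dv v g x).
  by apply/funext => x; apply: DvM; [apply: (Hf [::])|apply: (Hg [::])].
have H1 := IH _ _ (PN_D v Hf) (PN_le (leqnSn N) Hg).
have H2 := IH _ _ (PN_le (leqnSn N) Hf) (PN_D v Hg).
rewrite dlistD; last first.
  by move=> u Hu x; split; [apply: H1|apply: H2]; apply: leq_trans (ltnW Hu) Hs.
exact: differentiableD (H1 _ Hs z) (H2 _ Hs z).
Qed.

Lemma smoothM (f g : V -> R) : smooth f -> smooth g -> smooth (fun z => f z * g z).
Proof. by move=> /smoothP Hf /smoothP Hg; apply/smoothP => N; apply: PN_M. Qed.

Lemma smoothD (f g : V -> R) : smooth f -> smooth g -> smooth (fun z => f z + g z).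
Proof.
move=> Hf Hg s z; rewrite dlistD; last by move=> t _ x; split.
exact: differentiableD.
Qed.

Lemma smoothN (f : V -> R) : smooth f -> smooth (fun z => - f z).
Proof.
move=> Hf s z; rewrite dlistN; last by move=> t _ x.
exact: differentiableN.
Qed.

Lemma smooth_D v (f : V -> R) : smooth f -> smooth (Dv v f).
Proof. by move=> Hf s z; rewrite -dlist_rcons. Qed.

Lemma Dcomp (g gp : R -> R) (f : V -> R) (v z : V) :
  (forall t : R, is_derive t (1:R) g (gp t)) -> differentiable f z ->
  'D_v (fun x => g (f x)) z = gp (f z) * 'D_v f z.
Proof.
move=> Hg df.
have dg : differentiable g (f z).
  by apply/derivable1_diffP; have := Hg (f z); case.
rewrite (deriveE v); last exact: differentiable_comp.
rewrite diff_comp //= -(deriveE v df).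
set c := 'D_v f z.
have -> : 'd g (f z) c = c * 'd g (f z) 1.
  by rewrite -[in LHS](mulr1 c) -[c * 1]/(c *: (1:R)) linearZ.
by rewrite -derive1E' // derive1E derive_val mulrC.
Qed.

Lemma differentiable_gcomp (g gp : R -> R) (f : V -> R) (z : V) :
  (forall t : R, is_derive t (1:R) g (gp t)) -> differentiable f z ->
  differentiable (fun x => g (f x)) z.
Proof.
move=> Hg df; apply: differentiable_comp => //.
by apply/derivable1_diffP; have := Hg (f z); case.
Qed.

Lemma Dv_cos v (d : V -> R) : smooth d ->
  Dv v (fun z => cos (d z)) = (fun z => - (sin (d z) * Dv v d z)).
Proof.
move=> Hd; apply/funext => z; rewrite /Dv.
have Hc : forall t : R, is_derive t (1:R) cos (- sin t) by move=> t; apply: is_derive_cos.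
by rewrite (@Dcomp cos (fun t => - sin t) d v z Hc (Hd [::] z)) mulNr.
Qed.

Lemma Dv_sin v (d : V -> R) : smooth d ->
  Dv v (fun z => sin (d z)) = (fun z => cos (d z) * Dv v d z).
Proof.
move=> Hd; apply/funext => z; rewrite /Dv.
have Hc : forall t : R, is_derive t (1:R) sin (cos t) by move=> t; apply: is_derive_sin.
by rewrite (@Dcomp sin cos d v z Hc (Hd [::] z)).
Qed.

Lemma PN_cs (d : V -> R) : smooth d -> forall N,
  PN N (fun z => cos (d z)) /\ PN N (fun z => sin (d z)).
Proof.
move=> Hd.
have Hc : forall t : R, is_derive t (1:R) cos (- sin t) by move=> t; apply: is_derive_cos.
have Hs' : forall t : R, is_derive t (1:R) sin (cos t) by move=> t; apply: is_derive_sin.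
have dc z : differentiable (fun x => cos (d x)) z := @differentiable_gcomp cos _ d z Hc (Hd [::] z).
have ds z : differentiable (fun x => sin (d x)) z := @differentiable_gcomp sin _ d z Hs' (Hd [::] z).
elim => [|N [IHc IHs]].
  by split => s Hs z; move: Hs; rewrite leqn0 => /nilP -> /=.
have HD v : PN N (Dv v d) by move: N {IHc IHs}; apply/smoothP; apply: smooth_D.
split => s; case/lastP: s => [|t v] Hs z //.
- rewrite size_rcons ltnS in Hs.
  have P := @PN_M N _ _ IHs (HD v).
  rewrite dlist_rcons Dv_cos // dlistN; last first.
    by move=> u Hu x; apply: P; apply: leq_trans (ltnW Hu) Hs.
  by apply: differentiableN; apply: P.
- rewrite size_rcons ltnS in Hs.
  rewrite dlist_rcons Dv_sin //.
  have P := @PN_M N _ _ IHc (HD v).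
  by apply: P.
Qed.

Lemma smooth_cos (d : V -> R) : smooth d -> smooth (fun z => cos (d z)).
Proof. by move=> Hd; apply/smoothP => N; case: (@PN_cs d Hd N). Qed.
Lemma smooth_sin (d : V -> R) : smooth d -> smooth (fun z => sin (d z)).
Proof. by move=> Hd; apply/smoothP => N; case: (@PN_cs d Hd N). Qed.

End Gen.

Section Comb.
Variable n : nat.

Definition fl (m : nat -> nat) (l : seq nat) := flatten [seq nseq (m i) i | i <- l].

Lemma mem_fl m l y : y \in fl m l -> y \in l.
Proof.
by move=> /flattenP [s /mapP [i Hi ->]] /nseqP [-> _].
Qed.

Lemma pairwise_nseq k (x : nat) : pairwise leq (nseq k x).
Proof.
elim: k => //= k IH; rewrite IH andbT.
by apply/allP => y /nseqP [-> _].
Qed.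

Lemma fl_sorted m l : sorted leq l -> pairwise leq (fl m l).
Proof.
elim: l => // x l IH Hs.
rewrite /fl /= -/(fl m l).
have := Hs; rewrite /= (path_sortedE leq_trans) => /andP [Hall Hsl].
rewrite pairwise_cat pairwise_nseq IH ?andbT //.
apply/allrelP => a b /nseqP [-> _] /mem_fl Hb.
exact: (allP Hall).
Qed.

Definition codes (al be : 'I_n -> nat) : seq nat :=
  flatten [seq nseq (al j) (val j) | j <- enum 'I_n] ++
  flatten [seq nseq (be k) (n + val k)%N | k <- enum 'I_n].

Definition mc (al be : 'I_n -> nat) (i : nat) : nat :=
  if (i < n)%N then (if (insub i : option 'I_n) is Some j then al j else 0%N)
  else (if (insub (i - n)%N : option 'I_n) is Some k then be k else 0%N).

Lemma codes_fl al be : codes al be = fl (mc al be) (iota 0 (n + n)).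
Proof.
rewrite /fl iotaD map_cat flatten_cat add0n /codes; congr (_ ++ _).
  rewrite -val_enum_ord -map_comp; congr flatten; apply: eq_map => j /=.
  by rewrite /mc ltn_ord valK.
have -> : iota n n = map (addn n) (iota 0 n) by rewrite -iotaDl addn0.
rewrite -val_enum_ord -!map_comp; congr flatten.
apply: eq_map => k /=.
by rewrite /mc ltnNge leq_addr /= addKn valK.
Qed.

Lemma codes_sorted al be : pairwise leq (codes al be).
Proof. by rewrite codes_fl; apply: fl_sorted; apply: iota_sorted. Qed.

Lemma codes_lt al be : all (fun c => c < n + n)%N (codes al be).
Proof.
apply/allP => y; rewrite codes_fl => /mem_fl.
by rewrite mem_iota add0n.
Qed.

Lemma sum_pick (F : 'I_n -> nat) (x : nat) :
  (\sum_(j < n) (val j == x) * F j)%N =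
  (if (insub x : option 'I_n) is Some j then F j else 0%N).
Proof.
case: insubP => [j Hx <-|Hx].
  rewrite (bigD1 j) //= eqxx mul1n big1 ?addn0 // => i Hi.
  by rewrite (inj_eq val_inj) (negbTE Hi).
rewrite big1 // => i _.
case: eqP => [Hi|] //; move: Hx; by rewrite -Hi ltn_ord.
Qed.

Lemma sumn_enum (F : 'I_n -> nat) : sumn (map F (enum 'I_n)) = (\sum_(j<n) F j)%N.
Proof. by rewrite sumnE big_map big_enum. Qed.

Lemma sumn_enum2 (T : Type) (G : 'I_n -> T) (H : T -> nat) :
  sumn (map H (map G (enum 'I_n))) = (\sum_(j<n) H (G j))%N.
Proof. by rewrite -map_comp sumn_enum. Qed.

Lemma count_codes al be x :
  count_mem x (codes al be) =
  ((if (insub x : option 'I_n) is Some j then al j else 0%N) +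
   (if (insub (x - n)%N : option 'I_n) is Some k then
      (if (n <= x)%N then be k else 0%N) else 0%N))%N.
Proof.
rewrite /codes count_cat !count_flatten !sumn_enum2.
congr (_ + _)%N.
  rewrite -sum_pick; apply: eq_bigr => j _ /=.
  by rewrite count_nseq.
under eq_bigr => k _ do rewrite /= count_nseq.
case: (leqP n x) => Hnx.
  rewrite -sum_pick; apply: eq_bigr => k _ /=.
  congr (nat_of_bool _ * _)%N; apply/idP/idP => /eqP E; apply/eqP; [by rewrite -E addKn | by rewrite E subnKC].
rewrite big1; first by case: insub.
move=> k _ /=; case: eqP => [E|] //; move: Hnx; by rewrite -E ltnNge leq_addr.
Qed.

Lemma codes_repr (s : seq nat) :
  pairwise leq s -> all (fun c => c < n + n)%N s ->
  s = codes (fun j => count_mem (val j) s) (fun k => count_mem (n + val k)%N s).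
Proof.
move=> Hp Hl.
apply: (sorted_eq leq_trans anti_leq).
- by rewrite (sorted_pairwise leq_trans).
- by rewrite (sorted_pairwise leq_trans) codes_sorted.
apply/allP => x _ /=; rewrite count_codes.
case: (ltnP x n) => Hxn.
  rewrite insubT /=.
  by case: insub => [?|]; rewrite addn0.
rewrite insubN -?leqNgt // add0n.
case: insubP => [k Hk Ek|Hk].
  by rewrite Ek subnKC.
apply/eqP; apply/count_memPn; apply/negP => Hx.
have := allP Hl x Hx.
by rewrite -ltn_subLR // (negbTE Hk).
Qed.

End Comb.

Section Spec.
Variables (R : realType) (n : nat).
Local Notation V := (ps R n).

Definition dir (c : nat) : V :=
  if (insub c : option 'I_n) is Some j then dx R j
  else if (insub (c - n)%N : option 'I_n) is Some k then dxi R k else 0.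

Lemma dir_x (j : 'I_n) : dir (val j) = dx R j.
Proof. by rewrite /dir valK. Qed.

Lemma dir_xi (k : 'I_n) : dir (n + val k)%N = dxi R k.
Proof. by rewrite /dir insubN ?addKn ?valK // -leqNgt leq_addr. Qed.

Definition mlist (al be : 'I_n -> nat) : seq V :=
  flatten [seq nseq (al j) (dx R j) | j <- enum 'I_n] ++
  flatten [seq nseq (be k) (dxi R k) | k <- enum 'I_n].

Lemma mpartE al be (f : V -> R) : mpart al be f = dlist (mlist al be) f.
Proof. by []. Qed.

Lemma map_codes al be : map dir (codes al be) = mlist al be.
Proof.
rewrite /codes /mlist map_cat !map_flatten -!map_comp; congr (flatten _ ++ flatten _).
  by apply: eq_map => j /=; rewrite map_nseq dir_x.
by apply: eq_map => j /=; rewrite map_nseq dir_xi.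
Qed.

Definition DL (s : seq nat) (f : V -> R) := dlist (map dir s) f.

Lemma DL_rcons s c f : DL (rcons s c) f = DL s (Dv (dir c) f).
Proof. by rewrite /DL map_rcons dlist_rcons. Qed.

Lemma DL_add s (f g : V -> R) : smooth f -> smooth g ->
  DL s (fun z => f z + g z) = (fun z => DL s f z + DL s g z).
Proof. by move=> Hf Hg; rewrite /DL dlistD. Qed.

Lemma DL_neg s (f : V -> R) : smooth f ->
  DL s (fun z => - f z) = (fun z => - DL s f z).
Proof. by move=> Hf; rewrite /DL dlistN. Qed.

Lemma jb_ge1 (x : 'rV[R]_n) : 1 <= jb x.
Proof.
have H : 0 <= dotR x x.
  by rewrite /dotR; apply: sumr_ge0 => i _; rewrite -expr2 sqr_ge0.
by rewrite /jb -{1}sqrtr1 ler_sqrt ?lerDl ?addr_ge0.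
Qed.

Lemma jb_gt0 (x : 'rV[R]_n) : 0 < jb x.
Proof. exact: lt_le_trans ltr01 (jb_ge1 x). Qed.

Lemma pw_le (x : 'rV[R]_n) a b : a <= b -> jb x `^ a <= jb x `^ b.
Proof. by move=> ab; apply: ler_powR => //; apply: jb_ge1. Qed.

Lemma pw_D (x : 'rV[R]_n) a b : jb x `^ (a + b) = jb x `^ a * jb x `^ b.
Proof. by rewrite powRD // (gt_eqF (jb_gt0 x)) implybT. Qed.

Lemma pw_gt0 (x : 'rV[R]_n) a : 0 < jb x `^ a.
Proof. exact: powR_gt0 (jb_gt0 x). Qed.

Lemma C_ge0 (h : V -> R) (C : R) (p : V -> R) :
  (forall z, 0 < p z) -> (forall z, `|h z| <= C * p z) -> 0 <= C.
Proof.
move=> Hp H; have := le_trans (normr_ge0 _) (H 0).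
by rewrite pmulr_lge0.
Qed.

Lemma natS k : ((k.+1)%:R : R) = k%:R + 1.
Proof. by rewrite -addn1 natrD. Qed.

Definition Cl (N : nat) (mu : R) (w : nat) (f : V -> R) :=
  forall s, (size s <= N)%N -> pairwise leq s -> all (fun c => c < w)%N s ->
  exists C : R, forall z : V, `|DL s f z| <= C * jb z.2 `^ (mu + (size s)%:R).

Lemma Cl_mono N M mu mu' w w' f : (M <= N)%N -> (w' <= w)%N -> mu <= mu' ->
  Cl N mu w f -> Cl M mu' w' f.
Proof.
move=> HM Hw Hmu H s Hs Hp Ha.
have [|C HC] := H s (leq_trans Hs HM) Hp.
  by apply: sub_all Ha => x /leq_trans; apply.
exists C => z; apply: le_trans (HC z) _.
apply: ler_wpM2l; first exact: C_ge0 (fun z => pw_gt0 _ _) HC.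
by apply: pw_le; rewrite lerD2r.
Qed.

Lemma Cl_D N mu w c f : (c < w)%N -> Cl N.+1 mu w f -> Cl N (mu + 1) c.+1 (Dv (dir c) f).
Proof.
move=> Hc H s Hs Hp Ha.
have [|||C HC] := H (rcons s c).
- by rewrite size_rcons.
- rewrite pairwise_rcons Hp andbT; apply: sub_all Ha => x; by rewrite ltnS.
- rewrite all_rcons Hc /=; apply: sub_all Ha => x Hx; exact: leq_trans Hx Hc.
exists C => z; rewrite -DL_rcons; apply: le_trans (HC z) _.
rewrite size_rcons natS.
have -> : mu + ((size s)%:R + 1) = mu + 1 + (size s)%:R by ring.
by [].
Qed.

Lemma Cl_add N mu w (f g : V -> R) : smooth f -> smooth g ->
  Cl N mu w f -> Cl N mu w g -> Cl N mu w (fun z => f z + g z).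
Proof.
move=> Sf Sg Hf Hg s Hs Hp Ha.
have [C1 H1] := Hf s Hs Hp Ha; have [C2 H2] := Hg s Hs Hp Ha.
exists (C1 + C2) => z; rewrite DL_add // mulrDl.
exact: le_trans (ler_normD _ _) (lerD (H1 z) (H2 z)).
Qed.

Lemma Cl_neg N mu w (f : V -> R) : smooth f -> Cl N mu w f -> Cl N mu w (fun z => - f z).
Proof.
move=> Sf Hf s Hs Hp Ha.
have [C1 H1] := Hf s Hs Hp Ha.
by exists C1 => z; rewrite DL_neg // normrN.
Qed.

Lemma Cl_M N : forall w mu1 mu2 (f g : V -> R), smooth f -> smooth g ->
  Cl N mu1 w f -> Cl N mu2 w g -> Cl N (mu1 + mu2) w (fun z => f z * g z).
Proof.
elim: N => [|N IH] w mu1 mu2 f g Sf Sg Hf Hg s;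
  case/lastP: s => [|t c] Hs Hp Ha.
- have [C1 H1] := Hf [::] isT isT isT; have [C2 H2] := Hg [::] isT isT isT.
  exists (C1 * C2) => z; move: (H1 z) (H2 z); rewrite /DL /= !addr0 => h1 h2.
  rewrite normrM pw_D mulrACA.
  exact: ler_pM (normr_ge0 _) (normr_ge0 _) h1 h2.
- by rewrite size_rcons in Hs.
- have [C1 H1] := Hf [::] isT isT isT; have [C2 H2] := Hg [::] isT isT isT.
  exists (C1 * C2) => z; move: (H1 z) (H2 z); rewrite /DL /= !addr0 => h1 h2.
  rewrite normrM pw_D mulrACA.
  exact: ler_pM (normr_ge0 _) (normr_ge0 _) h1 h2.
rewrite size_rcons ltnS in Hs.
move: Hp; rewrite pairwise_rcons => /andP [Hle Hpt].
move: Ha; rewrite all_rcons => /andP [Hc Hat].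
have Hat' : all (fun x => x < c.+1)%N t by apply: sub_all Hle => x; rewrite ltnS.
rewrite DL_rcons.
have -> : Dv (dir c) (fun z => f z * g z) =
   (fun x => Dv (dir c) f x * g x + f x * Dv (dir c) g x).
  by apply/funext => x; apply: DvM; [apply: (Sf [::])|apply: (Sg [::])].
have Sdf := smooth_D (dir c) Sf; have Sdg := smooth_D (dir c) Sg.
rewrite DL_add; [|exact: smoothM|exact: smoothM].
have [C1 H1] := IH c.+1 (mu1 + 1) mu2 _ _ Sdf Sg (Cl_D Hc Hf)
   (Cl_mono (leqnSn N) Hc (lexx _) Hg) t Hs Hpt Hat'.
have [C2 H2] := IH c.+1 mu1 (mu2 + 1) _ _ Sf Sdg
   (Cl_mono (leqnSn N) Hc (lexx _) Hf) (Cl_D Hc Hg) t Hs Hpt Hat'.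
exists (C1 + C2) => z; rewrite mulrDl.
apply: le_trans (ler_normD _ _) (lerD _ _).
  apply: le_trans (H1 z) _; rewrite size_rcons natS.
  by have -> : mu1 + mu2 + ((size t)%:R + 1) = mu1 + 1 + mu2 + (size t)%:R by ring.
apply: le_trans (H2 z) _; rewrite size_rcons natS.
by have -> : mu1 + mu2 + ((size t)%:R + 1) = mu1 + (mu2 + 1) + (size t)%:R by ring.
Qed.

End Spec.

Section Spec2.
Variables (R : realType) (n : nat).
Local Notation V := (ps R n).
Local Notation dir := (@dir R n).

Lemma cexpiD (s t : R) : cexpi (s + t) = cexpi s * cexpi t.
Proof.
rewrite /cexpi cosD sinD; apply/eqP; rewrite eq_complex /=.
by apply/andP; split; apply/eqP; ring.
Qed.

Lemma dotR_sub (x y e : 'rV[R]_n) : dotR (x - y) e = dotR x e - dotR y e.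
Proof. by rewrite /dotR -sumrB; apply: eq_bigr => i _; rewrite !mxE mulrBl. Qed.

Lemma cmod_geRe (x y : R) : `|x| <= cmod (x +i* y)%C.
Proof.
have h1 := sqr_ge0 x; have h2 := sqr_ge0 y.
rewrite /cmod /= -sqrtr_sqr ler_sqrt; last exact: addr_ge0.
by rewrite lerDl.
Qed.

Lemma cmod_geIm (x y : R) : `|y| <= cmod (x +i* y)%C.
Proof.
have h1 := sqr_ge0 x; have h2 := sqr_ge0 y.
rewrite /cmod /= -sqrtr_sqr ler_sqrt; last exact: addr_ge0.
by rewrite lerDr.
Qed.

Lemma cmod_le (x y : R) : cmod (x +i* y)%C <= `|x| + `|y|.
Proof.
have H : 0 <= `|x| + `|y| by rewrite addr_ge0.
have h1 := sqr_ge0 x; have h2 := sqr_ge0 y.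
have E : `|x| + `|y| = Num.sqrt ((`|x| + `|y|) ^+ 2) by rewrite sqrtr_sqr (ger0_norm H).
rewrite /cmod /= E ler_sqrt; last exact: sqr_ge0.
rewrite sqrrD (real_normK (num_real x)) (real_normK (num_real y)).
by rewrite addrAC lerDl mulrn_wge0 // mulr_ge0.
Qed.

Definition dB (d : V -> R) := forall s c, pairwise leq s ->
  all (fun x => x < n + n)%N s -> (c < n + n)%N ->
  exists C : R, forall z : V,
    `|DL s (Dv (dir c) d) z| <= C * jb z.2 `^ (1 + (size s)%:R).

Lemma norm_cos_le1 (t : R) : `|cos t| <= 1.
Proof. by rewrite ler_norml cos_geN1 cos_le1. Qed.
Lemma norm_sin_le1 (t : R) : `|sin t| <= 1.
Proof. by rewrite ler_norml sin_geN1 sin_le1. Qed.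

Lemma Cl_cs (d : V -> R) : smooth d -> dB d -> forall N w, (w <= n + n)%N ->
  Cl N 0 w (fun z => cos (d z)) /\ Cl N 0 w (fun z => sin (d z)).
Proof.
move=> Sd Hd; elim => [|N IH] w Hw.
  split => s Hs _ _; move: Hs; rewrite leqn0 => /nilP ->; exists 1 => z;
    rewrite /DL /= addr0 powRr0 mulr1.
    exact: norm_cos_le1.
  exact: norm_sin_le1.
have Hdc c : (c < w)%N -> Cl N 1 c.+1 (Dv (dir c) d).
  move=> Hc s Hs Hp Ha.
  have Hw' : (c.+1 <= n + n)%N := leq_trans Hc Hw.
  apply: Hd => //; first by apply: sub_all Ha => x Hx; apply: leq_trans Hx Hw'.
split => s; case/lastP: s => [|t c] Hs Hp Ha.
- by exists 1 => z; rewrite /DL /= addr0 powRr0 mulr1; exact: norm_cos_le1.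
- rewrite size_rcons ltnS in Hs.
  move: Hp; rewrite pairwise_rcons => /andP [Hle Hpt].
  move: Ha; rewrite all_rcons => /andP [Hc Hat].
  have Hat' : all (fun x => x < c.+1)%N t by apply: sub_all Hle => x; rewrite ltnS.
  have Hw' : (c.+1 <= n + n)%N := leq_trans Hc Hw.
  rewrite DL_rcons Dv_cos // DL_neg; last exact: smoothM (smooth_sin Sd) (smooth_D _ Sd).
  have [C HC] := Cl_M (smooth_sin Sd) (smooth_D (dir c) Sd) (IH c.+1 Hw').2 (Hdc c Hc) Hs Hpt Hat'.
  exists C => z; rewrite normrN; apply: le_trans (HC z) _.
  by rewrite size_rcons natS; have -> : 0 + ((size t)%:R + 1) = 0 + 1 + (size t)%:R :> R by ring.
- by exists 1 => z; rewrite /DL /= addr0 powRr0 mulr1; exact: norm_sin_le1.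
- rewrite size_rcons ltnS in Hs.
  move: Hp; rewrite pairwise_rcons => /andP [Hle Hpt].
  move: Ha; rewrite all_rcons => /andP [Hc Hat].
  have Hat' : all (fun x => x < c.+1)%N t by apply: sub_all Hle => x; rewrite ltnS.
  have Hw' : (c.+1 <= n + n)%N := leq_trans Hc Hw.
  rewrite DL_rcons Dv_sin //.
  have [C HC] := Cl_M (smooth_cos Sd) (smooth_D (dir c) Sd) (IH c.+1 Hw').1 (Hdc c Hc) Hs Hpt Hat'.
  exists C => z; apply: le_trans (HC z) _.
  by rewrite size_rcons natS; have -> : 0 + ((size t)%:R + 1) = 0 + 1 + (size t)%:R :> R by ring.
Qed.

End Spec2.

Section Spec3.
Variables (R : realType) (n : nat).
Local Notation V := (ps R n).
Local Notation dir := (@dir R n).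

Lemma DL_mpart (s : seq nat) (f : V -> R) : pairwise leq s ->
  all (fun x => x < n + n)%N s ->
  DL s f = mpart (fun j : 'I_n => count_mem (val j) s)
                 (fun k : 'I_n => count_mem (n + val k)%N s) f.
Proof.
move=> Hp Hl; rewrite /DL [in LHS](codes_repr Hp Hl) map_codes.
by [].
Qed.

Lemma nat_ge0 (k : nat) : (0 : R) <= k%:R.
Proof. by []. Qed.

Lemma Sminf_Re (a : V -> R[i]) : Sminf a ->
  forall N mu, Cl N mu (n + n) (fun z => complex.Re (a z)).
Proof.
move=> Ha N mu s Hs Hp Hl.
rewrite (DL_mpart _ Hp Hl).
set al := fun j : 'I_n => _; set be := fun k : 'I_n => _.
have [_ [_ H]] := Ha (mu + (size s)%:R + (mlen be)%:R).
have [C HC] := H al be.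
exists C => z; apply: le_trans (cmod_geRe _ _) (le_trans (HC z) _).
by have -> : mu + (size s)%:R + (mlen be)%:R - (mlen be)%:R = mu + (size s)%:R by ring.
Qed.

Lemma Sminf_Im (a : V -> R[i]) : Sminf a ->
  forall N mu, Cl N mu (n + n) (fun z => complex.Im (a z)).
Proof.
move=> Ha N mu s Hs Hp Hl.
rewrite (DL_mpart _ Hp Hl).
set al := fun j : 'I_n => _; set be := fun k : 'I_n => _.
have [_ [_ H]] := Ha (mu + (size s)%:R + (mlen be)%:R).
have [C HC] := H al be.
exists C => z; apply: le_trans (cmod_geIm _ _) (le_trans (HC z) _).
by have -> : mu + (size s)%:R + (mlen be)%:R - (mlen be)%:R = mu + (size s)%:R by ring.
Qed.

Lemma dB_Splus (dd : V -> R) : Splus dd -> dB dd.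
Proof.
case=> Sd [Hx Hxi] s c Hp Hl Hc.
have E g := DL_mpart g Hp Hl.
set al := fun j : 'I_n => _ in E; set be := fun k : 'I_n => _ in E.
have Hle (z : V) (C : R) e : 0 <= C -> e <= 1 + (size s)%:R ->
    C * jb z.2 `^ e <= C * jb z.2 `^ (1 + (size s)%:R).
  by move=> HC He; apply: ler_wpM2l => //; apply: pw_le.
have hb := nat_ge0 (mlen be); have hs := nat_ge0 (size s).
case: (ltnP c n) => Hcn.
  have -> : dir c = dx R (Ordinal Hcn) by exact: (@dir_x R n (Ordinal Hcn)).
  have [_ H] := Hx (Ordinal Hcn); have [C HC] := H al be.
  exists C => z; rewrite E; apply: le_trans (HC z) (Hle _ _ _ _ _).
    exact: C_ge0 (fun z => pw_gt0 _ _) HC.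
  lra.
have Hk : (c - n < n)%N by rewrite ltn_subLR.
have -> : dir c = dxi R (Ordinal Hk).
  by rewrite -(@dir_xi R n (Ordinal Hk)) /= subnKC.
have [_ H] := Hxi (Ordinal Hk); have [C HC] := H al be.
exists C => z; rewrite E; apply: le_trans (HC z) (Hle _ _ _ _ _).
  exact: C_ge0 (fun z => pw_gt0 _ _) HC.
lra.
Qed.

Lemma Cl_comb (d f1 f2 : V -> R) : smooth d -> dB d -> smooth f1 -> smooth f2 ->
  (forall N mu, Cl N mu (n + n) f1) -> (forall N mu, Cl N mu (n + n) f2) ->
  forall N mu, Cl N mu (n + n) (fun z => cos (d z) * f1 z + sin (d z) * f2 z).
Proof.
move=> Sd Hd S1 S2 C1 C2 N mu.
have [Cc Cs] := Cl_cs Sd Hd N (leqnn (n + n)).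
have H1 := Cl_M (smooth_cos Sd) S1 Cc (C1 N mu).
have H2 := Cl_M (smooth_sin Sd) S2 Cs (C2 N mu).
rewrite add0r in H1 H2.
by apply: Cl_add => //; apply: smoothM => //; [apply: smooth_cos|apply: smooth_sin].
Qed.

Lemma Sminf_comb (b : V -> R[i]) (d f1 f2 f3 f4 : V -> R) :
  smooth d -> dB d -> smooth f1 -> smooth f2 -> smooth f3 -> smooth f4 ->
  (forall N mu, Cl N mu (n + n) f1) -> (forall N mu, Cl N mu (n + n) f2) ->
  (forall N mu, Cl N mu (n + n) f3) -> (forall N mu, Cl N mu (n + n) f4) ->
  (forall z, complex.Re (b z) = cos (d z) * f1 z + sin (d z) * f2 z) ->
  (forall z, complex.Im (b z) = cos (d z) * f3 z + sin (d z) * f4 z) ->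
  Sminf b.
Proof.
move=> Sd Hd S1 S2 S3 S4 C1 C2 C3 C4 ER EI m; rewrite /symbC.
have -> : (fun z => complex.Re (b z)) = (fun z => cos (d z) * f1 z + sin (d z) * f2 z)
  by apply/funext => z; apply: ER.
have -> : (fun z => complex.Im (b z)) = (fun z => cos (d z) * f3 z + sin (d z) * f4 z)
  by apply/funext => z; apply: EI.
have SR : smooth (fun z => cos (d z) * f1 z + sin (d z) * f2 z).
  by apply: smoothD; apply: smoothM => //; [apply: smooth_cos|apply: smooth_sin].
have SI : smooth (fun z => cos (d z) * f3 z + sin (d z) * f4 z).
  by apply: smoothD; apply: smoothM => //; [apply: smooth_cos|apply: smooth_sin].
split; first exact: SR.
split; first exact: SI.
move=> al be.
set s := codes al be.
have Hp := codes_sorted al be; have Hl := codes_lt al be.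
have [CR HR] := @Cl_comb d f1 f2 Sd Hd S1 S2 C1 C2 (size s) (m - (mlen be)%:R - (size s)%:R) s (leqnn _) Hp Hl.
have [CI HI] := @Cl_comb d f3 f4 Sd Hd S3 S4 C3 C4 (size s) (m - (mlen be)%:R - (size s)%:R) s (leqnn _) Hp Hl.
have Ex : m - (mlen be)%:R - (size s)%:R + (size s)%:R = m - (mlen be)%:R by ring.
rewrite Ex in HR HI.
exists (CR + CI) => z.
apply: le_trans (cmod_le _ _) _; rewrite mulrDl.
apply: lerD.
  by move: (HR z); rewrite /DL /s map_codes.
by move: (HI z); rewrite /DL /s map_codes.
Qed.

End Spec3.

Lemma cexpi_shift (R : realType) (p q : R) : cexpi p = cexpi (p + q) * cexpi (- q).
Proof. by rewrite -cexpiD addrK. Qed.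

Unset Implicit Arguments.

Theorem lemma2p9 (R : realType) (n : nat) (U : ps R n -> R)
    (Phi : ps R n -> ps R n) (A : 'I_n -> 'rV[R]_n -> R)
    (W : ('rV[R]_n -> R[i]) -> 'rV[R]_n -> R[i]) :
  hypU U -> assoc_Phi U Phi -> magnetic_pot A ->
  ((exists a : ps R n -> R[i], Sminf a /\
      forall u, schwartz u -> forall x, W u x = OpPhiA U A a u x)
   <->
   (exists b : ps R n -> R[i], Sminf b /\
      forall u, schwartz u -> forall x, W u x = magOp A b u x)).
Proof.
move=> [dd [HU [Spl _]]] _ _.
have Sd : smooth dd by case: Spl.
have Hd : dB dd by apply: dB_Splus.
split.
- move=> [a [Ha HW]].
  exists (fun z => cexpi (dd z) * a z); split.
    have SR : smooth (fun z => complex.Re (a z)) by case: (Ha 0).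
    have SI : smooth (fun z => complex.Im (a z)) by case: (Ha 0) => _ [].
    apply: (@Sminf_comb _ _ _ dd (fun z => complex.Re (a z)) (fun z => - complex.Im (a z))
             (fun z => complex.Im (a z)) (fun z => complex.Re (a z))) => //.
    + exact: smoothN.
    + exact: Sminf_Re.
    + by move=> N mu; apply: Cl_neg => //; apply: Sminf_Im.
    + exact: Sminf_Im.
    + exact: Sminf_Re.
    + by move=> z; rewrite /cexpi; case: (a z) => p q /=; ring.
    + by move=> z; rewrite /cexpi; case: (a z) => p q /=; ring.
  move=> u Hu x; rewrite HW // /OpPhiA /magOp; congr (_ * _); congr intCn.
  apply/funext => w /=.
  rewrite HU /= dotR_sub.
  have -> : dotR x (rsubmx w) + dd (x, rsubmx w) - dotR (lsubmx w) (rsubmx w) =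
     (dotR x (rsubmx w) - dotR (lsubmx w) (rsubmx w)) + dd (x, rsubmx w) by ring.
  rewrite cexpiD; ring.
- move=> [b [Hb HW]].
  exists (fun z => cexpi (- dd z) * b z); split.
    have SR : smooth (fun z => complex.Re (b z)) by case: (Hb 0).
    have SI : smooth (fun z => complex.Im (b z)) by case: (Hb 0) => _ [].
    apply: (@Sminf_comb _ _ _ dd (fun z => complex.Re (b z)) (fun z => complex.Im (b z))
             (fun z => complex.Im (b z)) (fun z => - complex.Re (b z))) => //.
    + exact: smoothN.
    + exact: Sminf_Re.
    + exact: Sminf_Im.
    + exact: Sminf_Im.
    + by move=> N mu; apply: Cl_neg => //; apply: Sminf_Re.
    + by move=> z; rewrite /cexpi cosN sinN; case: (b z) => p q /=; ring.
    + by move=> z; rewrite /cexpi cosN sinN; case: (b z) => p q /=; ring.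
  move=> u Hu x; rewrite HW // /OpPhiA /magOp; congr (_ * _); congr intCn.
  apply/funext => w /=.
  rewrite HU /= dotR_sub.
  have -> : dotR x (rsubmx w) + dd (x, rsubmx w) - dotR (lsubmx w) (rsubmx w) =
     (dotR x (rsubmx w) - dotR (lsubmx w) (rsubmx w)) + dd (x, rsubmx w) by ring.
  rewrite [in LHS](@cexpi_shift R (dotR x (rsubmx w) - dotR (lsubmx w) (rsubmx w)) (dd (x, rsubmx w))); ring.
Qed.
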